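(* Let $y_0=x_2x_0x_2^{-1}$. For every integer $n\ge1$, $x_0^n$ has one of the forms $M_0([11,11,11],[17,17,17],\dots)$, $M_0([11,11,11],[11,11,11],\dots)$, $M_{2^r-1}([26,26,26],[0,0,0],\dots)$ for some odd $r\ge1$, or $M_{2^r-1}([11,11,11],[0,0,0],\dots)$ for some even $r\ge2$; and for every $n\ge1$, $y_0^n$ has one of the forms $M_0([11,11,11],[44,219,177],\dots)$, $M_0([11,11,11],[54,193,171],\dots)$, $M_{2^r-1}([26,26,26],[0,157,106],\dots)$ for some odd $r\ge1$, or $M_{2^r-1}([11,11,11],[61,202,160],\dots)$ for some even $r\ge2$.
   Context: Consider infinite upper unitriangular block matrices $X=(X_{r,s})_{r,s\ge1}$ whose entries are $3\times3$ matrices over $\mathbb F_2$, with $X_{r,r}=I$, $X_{r,s}=0$ for $s<r$, and whose upper diagonals are $3$-periodic: for each $j\ge1$ there are $a_{j1},a_{j2},a_{j3}\in M(3,\mathbb F_2)$ with $X_{r,r+j}=a_{j,i}$, where $i\in\{1,2,3\}$, $i\equiv r\pmod 3$; $a_j=[a_{j1},a_{j2},a_{j3}]$ is the $j$-th upper diagonal. For $l\ge0$, $M_l(c_1,c_2,\dots)$ denotes such a matrix whose first $l$ upper diagonals are zero and whose $(l+1)$-st, $(l+2)$-nd, $\dots$ upper diagonals are $c_1,c_2,\dots$; diagonals hidden in ''$\dots$'' are unspecified, while a matrix written $M_0(c_1,\dots,c_m)$ without dots has all further diagonals zero. A matrix $u=(u_{pq})\in M(3,\mathbb F_2)$ is encoded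 by the integer $256u_{11}+128u_{12}+64u_{13}+32u_{21}+16u_{22}+8u_{23}+4u_{31}+2u_{32}+u_{33}$, and a diagonal by the triple of integers of its three blocks. The elements are $x_0=M_0([11,11,11],[17,17,17],[26,26,26],[11,11,0],[17,0,0])$, $x_2=M_0([46,68,217],[12,194,363],[26,326,77],[46,68,0],[12,0,0])$. *)

(* Defs.v *)
From HB Require Import structures.
From mathcomp Require Import all_boot all_order all_algebra.
Set Implicit Arguments. Unset Strict Implicit. Unset Printing Implicit Defensive.
Import GRing.Theory.
Local Open Scope ring_scope.

Notation blk := 'M['F_2]_3.

(* A 3-periodic upper unitriangular infinite block matrix X = (X_{r,s})_{r,s>=1}
   is represented by its upper diagonals: [X j i] is the block a_{j,i+1}
   (j >= 1 the diagonal index, i : 'I_3 so that i+1 is in {1,2,3}).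
   The value at j = 0 is irrelevant (the main diagonal is I). *)
Definition pmx := nat -> 'I_3 -> blk.

(* residue class of the row index r >= 1: i+1 = r mod 3 with i+1 in {1,2,3} *)
Definition phase (r : nat) : 'I_3 := inZp (r.-1).

Definition entry (X : pmx) (r s : nat) : blk :=
  if r == s then 1%:M else if (r < s)%N then X (s - r)%N (phase r) else 0.

Definition pone : pmx := fun _ _ => 0.

(* product: (XY)_{r,r+j} = sum_{k=0}^{j} X_{r,r+k} Y_{r+k,r+j}, computed at
   the representative row r = i+1 of the phase class i. *)
Definition pmul (X Y : pmx) : pmx := fun j i =>
  let r := i.+1 in \sum_(k < j.+1) entry X r (r + k) *m entry Y (r + k) (r + j).

Definition ppow (X : pmx) (n : nat) : pmx := iter n (pmul X) pone.

(* inverse, computed diagonal by diagonal from X Z = I: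
   Z_{r,r+j} = - sum_{k=1}^{j} X_{r,r+k} Z_{r+k,r+j}. [pinv_aux X n] is
   correct on diagonals 1..n. *)
Fixpoint pinv_aux (X : pmx) (n : nat) : pmx :=
  match n with
  | 0 => pone
  | n'.+1 => let Z := pinv_aux X n' in fun j i =>
      if j == n'.+1 then
        let r := i.+1 in
        - \sum_(1 <= k < j.+1) entry X r (r + k) *m entry Z (r + k) (r + j)
      else Z j i
  end.

Definition pinv (X : pmx) : pmx := fun j i => pinv_aux X j j i.

(* decoding of the integer code of a 3x3 matrix over F_2:
   code = 256 u11 + 128 u12 + 64 u13 + 32 u21 + ... + u33 *)
Definition dec (m : nat) : blk :=
  \matrix_(p < 3, q < 3) (((m %/ 2 ^ (8 - (3 * p + q))) %% 2)%N%:R : 'F_2).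

Definition dg (t : nat * nat * nat) : 'I_3 -> blk := fun i =>
  match val i with 0 => dec t.1.1 | 1 => dec t.1.2 | _ => dec t.2 end.

(* M_0(c_1,...,c_m) with all further diagonals zero *)
Definition mkM (cs : seq (nat * nat * nat)) : pmx := fun j i =>
  if (0 < j)%N then dg (nth (0, 0, 0)%N cs j.-1) i else 0.

(* X has the form M_l(c1, c2, ...): the first l upper diagonals vanish and
   the (l+1)-st and (l+2)-nd are c1, c2 (others unspecified). *)
Definition has_form (X : pmx) (l : nat) (c1 c2 : nat * nat * nat) : Prop :=
  (forall j i, (1 <= j <= l)%N -> X j i = 0) /\
  (forall i, X l.+1 i = dg c1 i) /\
  (forall i, X l.+2 i = dg c2 i).

Definition x0 : pmx :=
  mkM [:: (11, 11, 11); (17, 17, 17); (26, 26, 26); (11, 11, 0); (17, 0, 0)]%N.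
Definition x2 : pmx :=
  mkM [:: (46, 68, 217); (12, 194, 363); (26, 326, 77); (46, 68, 0); (12, 0, 0)]%N.
Definition y0 : pmx := pmul (pmul x2 x0) (pinv x2).

(* Main.v *)
Require Import Defs.
From mathcomp Require Import all_boot all_order all_algebra zify.
From Stdlib Require Import FunctionalExtensionality.
Set Implicit Arguments. Unset Strict Implicit. Unset Printing Implicit Defensive.
Import GRing.Theory.
Local Open Scope ring_scope.

Definition mat := nat -> nat -> blk.
Definition mulE (E F : mat) : mat := fun r s => \sum_(r <= k < s.+1) E r k *m F k s.
Definition idE : mat := fun r s => if r == s then 1%:M else 0.
Definition powE (E : mat) n : mat := iter n (mulE E) idE.
Definition UT (E : mat) := forall r s, (s < r)%N -> E r s = 0.
Definition ent (X : pmx) : mat := fun r s => entry X r.+1 s.+1.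

Lemma matext (E F : mat) : (forall r s, E r s = F r s) -> E = F.
Proof. move=> h; do 2 apply: functional_extensionality => ?; exact: h. Qed.

Lemma mulE_UT E F : UT (mulE E F).
Proof. by move=> r s lt; rewrite /mulE big_geq. Qed.

Lemma idE_UT : UT idE.
Proof. by move=> r s lt; rewrite /idE gtn_eqF. Qed.

Lemma powE_UT E n : UT (powE E n).
Proof. case: n => [|n]; [exact: idE_UT | exact: mulE_UT]. Qed.

Lemma ent_UT X : UT (ent X).
Proof. by move=> r s lt; rewrite /ent /entry gtn_eqF // ltnNge ltnW. Qed.

Lemma mulEA E F G : mulE (mulE E F) G = mulE E (mulE F G).
Proof.
apply: matext => r s; rewrite /mulE.
under eq_bigr => k _ do rewrite mulmx_suml.
under [RHS]eq_bigr => l _ do rewrite mulmx_sumr.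
rewrite [LHS](@eq_big_nat _ _ _ r s.+1 _
   (fun k => \sum_(r <= l < s.+1 | (l < k.+1)%N) E r l *m F l k *m G k s)); last first.
  by move=> k /andP[_ hk]; rewrite (@big_nat_widen _ _ _ r k.+1 s.+1).
under eq_bigr => k _ do rewrite big_mkcond.
rewrite exchange_big_nat; apply: eq_big_nat => l /andP[hl _].
rewrite (@big_nat_widenl _ _ _ l r) // big_mkcond; apply: eq_bigr => k _.
by rewrite ltnS mulmxA.
Qed.

Lemma mul1E F : UT F -> mulE idE F = F.
Proof.
move=> uF; apply: matext => r s; rewrite /mulE.
case: (leqP r s) => h.
  rewrite big_ltn // big_nat_cond big1 ?addr0; first by rewrite /idE eqxx mul1mx.
  by move=> k /andP[/andP[hk _] _]; rewrite /idE ltn_eqF // mul0mx.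
by rewrite big_geq // uF.
Qed.

Lemma mulE1 E : UT E -> mulE E idE = E.
Proof.
move=> uE; apply: matext => r s; rewrite /mulE.
case: (leqP r s) => h.
  rewrite big_nat_recr //= big_nat_cond big1 ?add0r; first by rewrite /idE eqxx mulmx1.
  by move=> k /andP[/andP[_ hk] _]; rewrite /idE ltn_eqF // mulmx0.
by rewrite big_geq // uE.
Qed.

Lemma powED E m n : UT E -> powE E (m + n) = mulE (powE E m) (powE E n).
Proof.
move=> uE; elim: m => [|m IH]; first by rewrite add0n [powE E 0]/powE /= mul1E //; apply: powE_UT.
by rewrite addSn /powE /= -/(powE E (m+n)) IH -mulEA.
Qed.

Lemma powEM E m n : UT E -> powE E (m * n) = powE (powE E m) n.
Proof.
move=> uE; elim: n => [|n IH]; first by rewrite muln0.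
by rewrite mulnS powED // IH.
Qed.

Lemma entry_off X a k : entry X a (a + k) = if k == 0%N then 1%:M else X k (phase a).
Proof.
rewrite /entry; case: k => [|k]; first by rewrite addn0 eqxx.
have h : (a < a + k.+1)%N by rewrite addnS ltnS leq_addr.
by rewrite ltn_eqF // h addKn.
Qed.

Lemma entry_eq X a b c d : (a <= b)%N -> (c <= d)%N -> (b - a = d - c)%N ->
  phase a = phase c -> entry X a b = entry X c d.
Proof.
move=> h1 h2 e p.
have -> : b = (a + (b - a))%N by rewrite subnKC.
have -> : d = (c + (d - c))%N by rewrite subnKC.
by rewrite !entry_off e p.
Qed.

Lemma phase_mod a c : (a.-1 %% 3 = c.-1 %% 3)%N -> phase a = phase c.
Proof. by move=> h; apply: val_inj. Qed.

Lemma raddnE (a b : nat) : (a + b)%R = (a + b)%N. Proof. by []. Qed.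

Lemma ent_rr X r : ent X r r = 1%:M.
Proof. by rewrite /ent /entry eqxx. Qed.

Lemma ent_one : ent pone = idE.
Proof.
apply: matext => r s; rewrite /ent /entry /idE eqSS.
by case: ifP => // _; case: ifP.
Qed.

Lemma ent_mul X Y : ent (pmul X Y) = mulE (ent X) (ent Y).
Proof.
apply: matext => r s; rewrite /mulE.
case: (ltngtP r s) => h; last first.
- by subst s; rewrite big_nat1 !ent_rr mulmx1.
- by rewrite big_geq // ent_UT.
rewrite {1}/ent /entry eqSS ltn_eqF // ltnS h /pmul.
set j := (s.+1 - r.+1)%N.
have ej : (s.+1 - r = j.+1)%N by rewrite /j subSS subSn // ltnW.
have hj : j = (s - r)%N by rewrite /j subSS.
clearbody j.
rewrite [RHS](@big_addn _ _ _ 0 s.+1 r) ej big_mkord.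
apply: eq_bigr => k _.
have hk : (k <= j)%N by rewrite -ltnS ltn_ord.
rewrite /ent; congr (_ *m _); apply: entry_eq; try lia.
- by apply: val_inj => /=; rewrite modn_mod.
- by apply: val_inj; rewrite /= modnDml addnC.
Qed.

Lemma ent_pow X n : ent (ppow X n) = powE (ent X) n.
Proof.
elim: n => [|n IH]; first exact: ent_one.
by rewrite /ppow /= -/(ppow X n) ent_mul IH.
Qed.


Lemma pinv_auxS X n m i : m != n.+1 -> pinv_aux X n.+1 m i = pinv_aux X n m i.
Proof. by move=> /negbTE h; rewrite [LHS]/= h. Qed.

Lemma pinv_aux_stable X n m i : (0 < m <= n)%N -> pinv_aux X n m i = pinv_aux X m m i.
Proof.
elim: n => [|n IH]; first by case: m => //; rewrite andbF.
move=> /andP[m0 mn]; case: (m =P n.+1) => [->|/eqP ne] //.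
by rewrite pinv_auxS // IH // m0 /= -ltnS ltn_neqAle mn andbT ne.
Qed.

Lemma entry_pinv_aux X n a b : (b - a <= n)%N ->
  entry (pinv_aux X n) a b = entry (pinv X) a b.
Proof.
move=> h; rewrite /entry; case: eqP => // _; case: ltnP => // ab.
by rewrite /pinv pinv_aux_stable // subn_gt0 ab h.
Qed.

Lemma pinv_auxSS X n i : pinv_aux X n.+1 n.+1 i =
  - \sum_(1 <= k < n.+2) entry X i.+1 (i.+1 + k) *m entry (pinv_aux X n) (i.+1 + k) (i.+1 + n.+1).
Proof. by rewrite [LHS]/= eqxx. Qed.

Lemma ent_inv X : mulE (ent X) (ent (pinv X)) = idE.
Proof.
apply: matext => r s; rewrite /mulE.
case: (ltngtP r s) => h; last first.
- by subst s; rewrite big_nat1 !ent_rr mulmx1 /idE eqxx.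
- by rewrite big_geq // /idE gtn_eqF.
rewrite big_ltn; last by rewrite ltnS ltnW.
rewrite ent_rr mul1mx /idE ltn_eqF //.
rewrite {1}/ent /entry eqSS ltn_eqF // ltnS h [pinv X _ _]/pinv.
set j := (s.+1 - r.+1)%N.
have hj : j = (s - r)%N by rewrite /j subSS.
have ej : (s.+1 - r = j.+1)%N by rewrite hj subSn // ltnW.
clearbody j.
case: j hj ej => [|j] hj ej; first by move: h; rewrite -subn_gt0 -hj.
rewrite pinv_auxSS.
rewrite [X in _ + X](@big_addn _ _ _ 1 s.+1 r) ej.
apply/eqP; rewrite addrC subr_eq0; apply/eqP.
apply: eq_big_nat => k /andP[k1 kj].
rewrite entry_pinv_aux; last by lia.
rewrite /ent; congr (_ *m _); apply: entry_eq; try lia.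
all: by apply: val_inj => /=; rewrite ?modn_mod // modnDml addnC.
Qed.

Lemma ent_linv X : mulE (ent (pinv X)) (ent X) = idE.
Proof.
have AB := ent_inv X.
have BC := ent_inv (pinv X).
have AC : ent X = ent (pinv (pinv X)).
  transitivity (mulE (ent X) (mulE (ent (pinv X)) (ent (pinv (pinv X))))).
    by rewrite BC mulE1 //; exact: ent_UT.
  by rewrite -mulEA AB mul1E //; exact: ent_UT.
by rewrite AC.
Qed.

Lemma powE_conj A E B n : UT A -> mulE B A = idE -> mulE A B = idE ->
  powE (mulE (mulE A E) B) n = mulE (mulE A (powE E n)) B.
Proof.
move=> uA BA AB; elim: n => [|n IH]; first by rewrite /= mulE1.
rewrite /powE /= -/(powE _ n) -/(powE _ n) IH !mulEA.
by rewrite -[mulE B (mulE A _)]mulEA BA mul1E //; apply: mulE_UT.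
Qed.

Definition addE (E F : mat) : mat := fun r s => E r s + F r s.

Lemma mulEDr E F G : mulE E (addE F G) = addE (mulE E F) (mulE E G).
Proof.
apply: matext => r s; rewrite /mulE /addE -big_split /=.
by apply: eq_bigr => k _; rewrite mulmxDr.
Qed.

Lemma mulEDl E F G : mulE (addE F G) E = addE (mulE F E) (mulE G E).
Proof.
apply: matext => r s; rewrite /mulE /addE -big_split /=.
by apply: eq_bigr => k _; rewrite mulmxDl.
Qed.

Definition Van (P : mat) L := forall r s, (s < r + L)%N -> P r s = 0.

Lemma VanL F P L : Van P L -> UT F -> (forall r, F r r = 1%:M) ->
  [/\ Van (mulE F P) L, (forall r, mulE F P r (r + L)%N = P r (r + L)%N) &
   (forall r, mulE F P r (r + L)%N.+1 = P r (r + L)%N.+1 + F r r.+1 *m P r.+1 (r + L)%N.+1)].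
Proof.
move=> vP uF dF; split.
- move=> r s h; rewrite /mulE big_nat_cond big1 // => k /andP[/andP[k1 k2] _].
  by rewrite vP ?mulmx0 //; lia.
- move=> r; rewrite /mulE big_ltn; last by lia.
  rewrite dF mul1mx big_nat_cond big1 ?addr0 // => k /andP[/andP[k1 k2] _].
  by rewrite vP ?mulmx0 //; lia.
- move=> r; rewrite /mulE big_ltn; last by lia.
  rewrite big_ltn; last by lia.
  rewrite dF mul1mx big_nat_cond big1 ?addr0 // => k /andP[/andP[k1 k2] _].
  by rewrite vP ?mulmx0 //; lia.
Qed.

Lemma VanR F P L : Van P L -> UT F -> (forall r, F r r = 1%:M) ->
  [/\ Van (mulE P F) L, (forall r, mulE P F r (r + L)%N = P r (r + L)%N) &
   (forall r, mulE P F r (r + L)%N.+1 = P r (r + L)%N.+1 + P r (r + L)%N *m F (r + L)%N (r + L)%N.+1)].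
Proof.
move=> vP uF dF; split.
- move=> r s h; rewrite /mulE big_nat_cond big1 // => k /andP[/andP[k1 k2] _].
  by rewrite vP ?mul0mx //; lia.
- move=> r; rewrite /mulE big_nat_recr /=; last by lia.
  rewrite dF mulmx1 big_nat_cond big1 ?add0r // => k /andP[/andP[k1 k2] _].
  by rewrite vP ?mul0mx //; lia.
- move=> r; rewrite /mulE big_nat_recr /=; last by lia.
  rewrite big_nat_recr /=; last by lia.
  rewrite dF mulmx1 big_nat_cond big1 ?add0r; first by rewrite addrC.
  move=> k /andP[/andP[k1 k2] _].
  by rewrite vP ?mul0mx //; lia.
Qed.

Lemma blk_add2 (A : blk) : A + A = 0.
Proof.
apply/matrixP => p q; rewrite !mxE; apply/eqP.
by case: (A p q) => [[|[|]] ?].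
Qed.

Lemma blk_opp (A : blk) : - A = A.
Proof. by apply/eqP; rewrite eq_sym -subr_eq0 opprK blk_add2. Qed.

Lemma big_nat_pick (F : nat -> blk) m n k0 : (m <= k0 < n)%N ->
  (forall k, (m <= k < n)%N -> k != k0 -> F k = 0) -> \sum_(m <= k < n) F k = F k0.
Proof.
move=> /andP[h1 h2] hF.
rewrite (big_cat_nat h1 (ltnW h2)) /= [X in _ + X]big_ltn //.
rewrite big_nat_cond big1 ?add0r; last first.
  move=> k /andP[/andP[k1 k2] _]; apply: hF; first by lia.
  by rewrite ltn_eqF.
rewrite big_nat_cond big1 ?addr0 // => k /andP[/andP[k1 k2] _]; apply: hF; first by lia.
by rewrite gtn_eqF.
Qed.

Definition Form (E : mat) L c d := [/\ UT E, (forall r, E r r = 1%:M),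
  (forall r s, (r < s)%N -> (s < r + L)%N -> E r s = 0),
  (forall r, E r (r + L)%N = c) & (forall r, E r (r + L)%N.+1 = d)].

Lemma mulE_split E F r s : (r < s)%N -> E r r = 1%:M -> F s s = 1%:M ->
  mulE E F r s = F r s + E r s + \sum_(r.+1 <= k < s) E r k *m F k s.
Proof.
move=> h e f; rewrite /mulE big_ltn; last by lia.
rewrite big_nat_recr /=; last by lia.
by rewrite e f mul1mx mulmx1 -addrA [E r s + _]addrC.
Qed.

Lemma mulE_diag E F r : E r r = 1%:M -> F r r = 1%:M -> mulE E F r r = 1%:M.
Proof. by move=> e f; rewrite /mulE big_nat1 e f mulmx1. Qed.

Lemma Form_sq E L c d : (0 < L)%N -> c *m d = d *m c -> Form E L c d ->
  Form (mulE E E) (L + L) (c *m c) 0.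
Proof.
move=> L0 cd [uE dE vE cE dEE]; split.
- exact: mulE_UT.
- by move=> r; rewrite mulE_diag.
- move=> r s h1 h2; rewrite mulE_split // blk_add2 add0r big_nat_cond big1 //.
  move=> k /andP[/andP[k1 k2] _]; case: (ltnP k (r + L)) => hk.
    by rewrite vE ?mul0mx //; lia.
  by rewrite (vE k s) ?mulmx0 //; lia.
- move=> r; rewrite mulE_split ?dE //; last by lia.
  rewrite blk_add2 add0r (@big_nat_pick _ _ _ (r + L)%N); last first.
  + move=> k /andP[k1 k2] ne; case: (ltnP k (r + L)) => hk.
      by rewrite vE ?mul0mx //; lia.
    by rewrite (vE k) ?mulmx0 //; lia.
  + by lia.
  by rewrite cE [(r + (L + L))%N]addnA cE.
- move=> r; rewrite mulE_split ?dE //; last by lia.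
  rewrite blk_add2 add0r (@big_cat_nat _ _ _ (r + L)%N.+1); try lia.
  rewrite (@big_nat_pick _ _ _ (r + L)%N); last first.
  + move=> k /andP[k1 k2] ne; by rewrite vE ?mul0mx //; lia.
  + by lia.
  rewrite (@big_nat_pick _ _ _ (r + L)%N.+1); last first.
  + move=> k /andP[k1 k2] ne; by rewrite (vE k) ?mulmx0 //; lia.
  + by lia.
  rewrite cE dEE /=.
  have -> : ((r + (L + L)).+1 = (r + L + L).+1)%N by lia.
  rewrite dEE.
  have -> : ((r + L + L).+1 = (r + L)%N.+1 + L)%N by lia.
  by rewrite cE cd blk_add2.
Qed.

Lemma Form_add E F L c d c' d' : (1 < L)%N -> Form E L c d -> Form F L c' d' ->
  Form (mulE E F) L (c + c') (d + d').
Proof.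
move=> L1 [uE dE vE cE dEE] [uF dF vF cF dFF].
have mid : forall r s, (r < s)%N -> (s <= (r + L)%N.+1)%N ->
    mulE E F r s = F r s + E r s.
  move=> r s h1 h2; rewrite mulE_split // big_nat_cond big1 ?addr0 //.
  move=> k /andP[/andP[k1 k2] _]; case: (ltnP k (r + L)) => hk.
    by rewrite vE ?mul0mx //; lia.
  by rewrite (vF k s) ?mulmx0 //; lia.
split.
- exact: mulE_UT.
- by move=> r; rewrite mulE_diag.
- by move=> r s h1 h2; rewrite mid ?vE ?vF ?addr0 //; lia.
- by move=> r; rewrite mid ?cE ?cF 1?addrC //; lia.
- by move=> r; rewrite mid ?dEE ?dFF 1?addrC //; lia.
Qed.

Lemma Form_add1 E F c d c' d' : Form E 1 c d -> Form F 1 c' d' ->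
  Form (mulE E F) 1 (c + c') (d + d' + c *m c').
Proof.
move=> [uE dE vE cE dEE] [uF dF vF cF dFF]; split.
- exact: mulE_UT.
- by move=> r; rewrite mulE_diag.
- by move=> r s h1 h2; lia.
- by move=> r; rewrite mulE_split ?dF // ?big_geq ?addr0 ?cE ?cF 1?addrC //; lia.
- move=> r; rewrite mulE_split ?dF //; last by lia.
  rewrite (@big_nat_pick _ _ _ r.+1); [|lia| move=> k hk /eqP ne; lia].
  have e1 : E r r.+1 = c by rewrite -(cE r) addn1.
  have e2 : F r.+1 (r + 1)%N.+1 = c' by rewrite -(cF r.+1) !addn1.
  by rewrite e1 e2 dEE dFF [d' + d]addrC.
Qed.

Ltac mxcomp := apply/matrixP; intros p q; apply/eqP;
  rewrite ?opprK !(mxE, big_ord_recr, big_ord0) /=;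
  destruct p as [[|[|[|?]]] ?]; try done; destruct q as [[|[|[|?]]] ?]; done.

Definition T2 := (46, 68, 217)%N.

Lemma cy1 (i : 'I_3) : dec 17 + dg T2 i *m dec 11 + dec 11 *m - dg T2 (inZp (i + 1)%N) = dg (44, 219, 177)%N i.
Proof. rewrite blk_opp; case: i => [[|[|[|]]] ?] //=; mxcomp. Qed.
Lemma cy2 (i : 'I_3) : dec 11 + dg T2 i *m dec 11 + dec 11 *m - dg T2 (inZp (i + 1)%N) = dg (54, 193, 171)%N i.
Proof. rewrite blk_opp; case: i => [[|[|[|]]] ?] //=; mxcomp. Qed.
Lemma cy3 (i : 'I_3) : 0 + dg T2 i *m dec 26 + dec 26 *m - dg T2 (inZp (i + 2)%N) = dg (0, 157, 106)%N i.
Proof. rewrite blk_opp; case: i => [[|[|[|]]] ?] //=; mxcomp. Qed.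
Lemma cy4 (i : 'I_3) : 0 + dg T2 i *m dec 11 + dec 11 *m - dg T2 (inZp (i + 1)%N) = dg (61, 202, 160)%N i.
Proof. rewrite blk_opp; case: i => [[|[|[|]]] ?] //=; mxcomp. Qed.

Lemma c_aa : dec 11 *m dec 11 = dec 26. Proof. mxcomp. Qed.
Lemma c_cc : dec 26 *m dec 26 = dec 11. Proof. mxcomp. Qed.
Lemma c_ec : dec 17 + dec 26 = dec 11. Proof. mxcomp. Qed.
Lemma c_eac : dec 17 + dec 11 + dec 26 = 0. Proof. mxcomp. Qed.
Lemma c_ae : dec 11 *m dec 17 = dec 17 *m dec 11. Proof. mxcomp. Qed.

Lemma ent_off X r k : (0 < k)%N -> ent X r (r + k)%N = X k (inZp r).
Proof.
move=> k0; rewrite /ent -addSn entry_off; case: eqP => [e|_ //].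
by move: k0; rewrite e.
Qed.

Lemma inZp_val (i : 'I_3) : inZp i = i.
Proof. by apply: val_inj; rewrite /= modn_small. Qed.

Lemma dg_const t i : dg (t, t, t) i = dec t.
Proof. by rewrite /dg; case: (val i) => [|[|]]. Qed.

Definition X0 := ent x0.
Definition a11 := dec 11. Definition e17 := dec 17. Definition c26 := dec 26.

Lemma X0_form : Form X0 1 a11 e17.
Proof.
split.
- exact: ent_UT.
- by move=> r; rewrite /X0 ent_rr.
- by move=> r s; lia.
- by move=> r; rewrite /X0 ent_off // /x0 /mkM /= dg_const.
- by move=> r; rewrite /X0 -addnS ent_off // /x0 /mkM /= dg_const.
Qed.

Lemma idE_form : Form idE 1 0 0.
Proof.
split.
- exact: idE_UT.
- by move=> r; rewrite /idE eqxx.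
- by move=> r s; lia.
- by move=> r; rewrite /idE -{1}(addn0 r) eqn_add2l.
- by move=> r; rewrite /idE ltn_eqF //; lia.
Qed.

Lemma Form_eq E L c d c' d' : Form E L c d -> c = c' -> d = d' -> Form E L c' d'.
Proof. by move=> h <- <-. Qed.

Definition d1 n := match (n %% 4)%N with 1 | 3 => a11 | _ => 0 end.
Definition d2 n := match (n %% 4)%N with 0 => 0 | 1 => e17 | 2 => c26 | _ => a11 end.

Lemma X0_pow n : Form (powE X0 n) 1 (d1 n) (d2 n).
Proof.
elim: n => [|n IH]; first exact: idE_form.
have := Form_add1 X0_form IH.
rewrite /powE /= -/(powE X0 n) => h; apply: (Form_eq h).
- rewrite /d1; have e : (n.+1 %% 4 = (n %% 4).+1 %% 4)%N by rewrite -addn1 -modnDml addn1.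
  rewrite e; case: (n %% 4)%N (ltn_pmod n (isT : (0 < 4)%N)) => [|[|[|[|k]]]] //= _.
  + by rewrite addr0.
  + by rewrite blk_add2.
  + by rewrite addr0.
  + by rewrite blk_add2.
- rewrite /d1 /d2; have e : (n.+1 %% 4 = (n %% 4).+1 %% 4)%N by rewrite -addn1 -modnDml addn1.
  rewrite e; case: (n %% 4)%N (ltn_pmod n (isT : (0 < 4)%N)) => [|[|[|[|k]]]] //= _.
  + by rewrite mulmx0 !addr0.
  + by rewrite blk_add2 add0r c_aa.
  + by rewrite mulmx0 addr0 c_ec.
  + by rewrite c_aa c_eac.
Qed.

Definition cr r := if odd r then c26 else a11.

Lemma X0_pow2 r : (0 < r)%N -> Form (powE X0 (2 ^ r)) (2 ^ r) (cr r) 0.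
Proof.
elim: r => [//|r IH] _.
case: r IH => [|r] IH.
  have h := Form_sq (isT : (0 < 1)%N) c_ae X0_form.
  rewrite expn1 /powE /= mulE1; last exact: ent_UT.
  by apply: (Form_eq h); rewrite // c_aa.
have h := Form_sq _ _ (IH isT).
rewrite expnS mulnC powEM; last exact: ent_UT.
rewrite /powE /= mulE1; last exact: powE_UT.
rewrite -/(powE X0 (2 ^ r.+1)) muln2 -addnn.
apply: (Form_eq (h _ _)) => //.
- by rewrite expn_gt0.
- by rewrite mulmx0 mul0mx.
- by rewrite /cr /=; case: (odd r) => /=; rewrite ?c_aa ?c_cc.
Qed.

Lemma pow_odd P L cc m : (1 < L)%N -> Form P L cc 0 -> UT P ->
  Form (powE P m.+1) L (if odd m.+1 then cc else 0) 0.
Proof.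
move=> L1 hP uP; elim: m => [|m IH].
  by rewrite /powE /= mulE1.
have h := Form_add L1 hP IH.
rewrite /powE /= -/(powE P m.+1); apply: (Form_eq h).
- by rewrite /= negbK; case: (odd m) => /=; rewrite ?addr0 ?blk_add2.
- by rewrite addr0.
Qed.

Lemma decomp n : (0 < n)%N -> exists r m, odd m /\ n = (2 ^ r * m)%N.
Proof.
elim/ltn_ind: n => n IH n0.
case o: (odd n); first by exists 0%N, n; rewrite expn0 mul1n.
have e := odd_double_half n; rewrite o add0n in e.
have [r [m [om em]]] : exists r m, odd m /\ n./2 = (2 ^ r * m)%N.
  apply: IH; lia.
by exists r.+1, m; split => //; rewrite -e em expnS -mul2n mulnA.
Qed.

Lemma conj_form A B E L c d : UT A -> (forall r, A r r = 1%:M) -> UT B ->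
  (forall r, B r r = 1%:M) -> mulE A B = idE -> (0 < L)%N -> Form E L c d ->
  [/\ (forall r s, (r < s)%N -> (s < r + L)%N -> mulE (mulE A E) B r s = 0),
      (forall r, mulE (mulE A E) B r (r + L)%N = c) &
      (forall r, mulE (mulE A E) B r (r + L)%N.+1 =
          d + A r r.+1 *m c + c *m B (r + L)%N (r + L)%N.+1)].
Proof.
move=> uA dA uB dB AB L0 [uE dE vE cE dEE].
pose P : mat := fun r s => E r s - idE r s.
have EP : E = addE idE P by apply: matext => r s; rewrite /addE /P addrC subrK.
have vP : Van P L.
  move=> r s h; rewrite /P; case: (ltngtP r s) => h'.
  - by rewrite vE // /idE ltn_eqF // subr0.
  - by rewrite uE // idE_UT // subr0.
  - by subst s; rewrite dE /idE eqxx subrr.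
have YE : mulE (mulE A E) B = addE idE (mulE (mulE A P) B).
  by rewrite EP mulEDr mulE1 // mulEDl AB.
have [vQ cQ dQ] := VanL vP uA dA.
have [vR cR dR] := VanR vQ uB dB.
have i1 : forall r, idE r (r + L)%N = 0 by move=> r; rewrite /idE ltn_eqF //; lia.
have i2 : forall r, idE r (r + L)%N.+1 = 0 by move=> r; rewrite /idE ltn_eqF //; lia.
rewrite YE; split.
- by move=> r s h1 h2; rewrite /addE vR // /idE ltn_eqF // add0r.
- by move=> r; rewrite /addE cR cQ /P cE i1 add0r subr0.
- move=> r; rewrite /addE dR dQ cQ /P dEE cE i1 i2 add0r !subr0.
  by rewrite -!addSn cE i1 subr0.
Qed.


Lemma has_form_of X l c1 c2 :
  (forall r s, (r < s)%N -> (s < r + l.+1)%N -> ent X r s = 0) ->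
  (forall i : 'I_3, ent X i (i + l.+1)%N = dg c1 i) ->
  (forall i : 'I_3, ent X i (i + l.+1)%N.+1 = dg c2 i) -> has_form X l c1 c2.
Proof.
move=> v h1 h2; split; [|split].
- move=> j i /andP[j1 jl]; have := ent_off X i j1; rewrite inZp_val => <-.
  by apply: v; lia.
- by move=> i; have := ent_off X i (ltn0Sn l); rewrite inZp_val => <-.
- move=> i; have := ent_off X i (ltn0Sn l.+1); rewrite inZp_val => <-.
  by rewrite addnS h2.
Qed.

Lemma has_form_Form X l c1 c2 : Form (ent X) l.+1 (dec c1) (dec c2) ->
  has_form X l (c1, c1, c1) (c2, c2, c2).
Proof.
move=> [uE dE vE cE dEE]; apply: has_form_of => //.
- by move=> i; rewrite cE dg_const.
- by move=> i; rewrite dEE dg_const.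
Qed.

Lemma pinv1 X i : pinv X 1 i = - X 1 i.
Proof.
rewrite /pinv pinv_auxSS big_nat1 entry_off /=.
by rewrite /entry eqxx mulmx1 /phase /= inZp_val.
Qed.

Lemma pow2mod3 r : (2 ^ r %% 3 = if odd r then 2 else 1)%N.
Proof.
elim: r => [//|r IH]; rewrite expnS -modnMmr IH /=.
by case: (odd r).
Qed.

Lemma inZp_mod (i : 'I_3) L : (inZp (i + L) : 'I_3) = inZp (i + (L %% 3)).
Proof. by apply: val_inj; rewrite /= modnDmr. Qed.

Lemma dec0 : dec 0 = 0.
Proof. by apply/matrixP => p q; rewrite !mxE div0n mod0n. Qed.

Lemma odd_mod4 n : odd n -> (n %% 4 = 1)%N \/ (n %% 4 = 3)%N.
Proof.
move=> on; move: on; rewrite {1}(divn_eq n 4) oddD oddM andbF /=.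
by case: (n %% 4)%N (ltn_pmod n (isT : (0 < 4)%N)) => [|[|[|[|k]]]] //=; auto.
Qed.

Lemma eL r : ((2 ^ r.+1 - 1).+1 = 2 ^ r.+1)%N.
Proof. by rewrite subn1 prednK // expn_gt0. Qed.

Lemma L1 r : (1 < 2 ^ r.+1)%N.
Proof. by rewrite expnS; have := expn_gt0 2 r; lia. Qed.

Lemma x0_big n r m : odd m -> n = (2 ^ r.+1 * m)%N ->
  Form (powE X0 n) (2 ^ r.+1 - 1)%N.+1 (cr r.+1) 0.
Proof.
move=> om ->; rewrite eL powEM; last exact: ent_UT.
case: m om => [//|m] om.
have := pow_odd m (L1 r) (X0_pow2 (ltn0Sn r)) (powE_UT _ _).
by rewrite om.
Qed.

Lemma part1 n : (1 <= n)%N ->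
     has_form (ppow x0 n) 0 (11, 11, 11)%N (17, 17, 17)%N \/
     has_form (ppow x0 n) 0 (11, 11, 11)%N (11, 11, 11)%N \/
     (exists r : nat, (1 <= r)%N /\ odd r /\
        has_form (ppow x0 n) (2 ^ r - 1)%N (26, 26, 26)%N (0, 0, 0)%N) \/
     (exists r : nat, (2 <= r)%N /\ ~~ odd r /\
        has_form (ppow x0 n) (2 ^ r - 1)%N (11, 11, 11)%N (0, 0, 0)%N).
Proof.
move=> n1; have [r [m [om en]]] := decomp n1.
case: r en => [|r] en.
- rewrite expn0 mul1n in en; subst m.
  have h := X0_pow n; rewrite -ent_pow /d1 /d2 in h.
  case: (odd_mod4 om) => e; rewrite e in h.
  + by left; apply: has_form_Form.
  + by right; left; apply: has_form_Form.
- have h := x0_big om en; rewrite -ent_pow /cr in h.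
  case or: (odd r.+1); rewrite or -dec0 in h.
  + by right; right; left; exists r.+1; split => //; split => //; apply: has_form_Form.
  + right; right; right; exists r.+1; split; last by rewrite or; split => //; apply: has_form_Form.
    by case: r or {h en} => [|r].
Qed.

Definition A2 := ent x2.
Definition B2 := ent (pinv x2).

Lemma Y_pow n : ent (ppow y0 n) = mulE (mulE (ent x2) (powE X0 n)) (ent (pinv x2)).
Proof.
rewrite ent_pow /y0 !ent_mul powE_conj //.
- exact: ent_UT.
- exact: ent_linv.
- exact: ent_inv.
Qed.

Lemma A2_1 r : ent x2 r r.+1 = dg T2 (inZp r).
Proof. by rewrite -[r.+1]addn1 ent_off. Qed.

Lemma B2_1 r : ent (pinv x2) r r.+1 = - dg T2 (inZp r).
Proof. by rewrite -[r.+1]addn1 ent_off // pinv1. Qed.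

Lemma y_form n L c d c1 c2 l : L = l.+1 -> Form (powE X0 n) L c d ->
  (forall i : 'I_3, c = dg c1 i) ->
  (forall i : 'I_3, d + dg T2 i *m c + c *m - dg T2 (inZp (i + L)%N) = dg c2 i) ->
  has_form (ppow y0 n) l c1 c2.
Proof.
move=> eqL hE hc hd.
have L0 : (0 < L)%N by rewrite eqL.
have [v cY dY] := conj_form (ent_UT x2) (ent_rr x2) (ent_UT (pinv x2))
  (ent_rr (pinv x2)) (ent_inv x2) L0 hE.
apply: has_form_of; rewrite Y_pow.
- by move=> r s h1 h2; apply: v => //; rewrite eqL.
- by move=> i; rewrite -eqL cY.
- by move=> i; rewrite -eqL dY A2_1 B2_1 inZp_val.
Qed.

Lemma part2 n : (1 <= n)%N ->
     has_form (ppow y0 n) 0 (11, 11, 11)%N (44, 219, 177)%N \/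
     has_form (ppow y0 n) 0 (11, 11, 11)%N (54, 193, 171)%N \/
     (exists r : nat, (1 <= r)%N /\ odd r /\
        has_form (ppow y0 n) (2 ^ r - 1)%N (26, 26, 26)%N (0, 157, 106)%N) \/
     (exists r : nat, (2 <= r)%N /\ ~~ odd r /\
        has_form (ppow y0 n) (2 ^ r - 1)%N (11, 11, 11)%N (61, 202, 160)%N).
Proof.
move=> n1; have [r [m [om en]]] := decomp n1.
case: r en => [|r] en.
- rewrite expn0 mul1n in en; subst m.
  have h := X0_pow n; rewrite /d1 /d2 in h.
  case: (odd_mod4 om) => e; rewrite e in h.
  + left; apply: (y_form (erefl 1%N) h) => i; first by rewrite dg_const.
    exact: cy1.
  + right; left; apply: (y_form (erefl 1%N) h) => i; first by rewrite dg_const.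
    exact: cy2.
- have h := x0_big om en; rewrite /cr in h.
  have hm : forall i : 'I_3, inZp (i + (2 ^ r.+1 - 1).+1)%N = inZp (i + (if odd r.+1 then 2 else 1))%N :> 'I_3.
    by move=> i; rewrite inZp_mod eL pow2mod3.
  case or: (odd r.+1); rewrite or in h hm.
  + right; right; left; exists r.+1; split => //; split => //.
    apply: (y_form (erefl _) h) => i; first by rewrite dg_const.
    by rewrite hm; exact: cy3.
  + right; right; right; exists r.+1; split; last first.
      rewrite or; split => //.
      apply: (y_form (erefl _) h) => i; first by rewrite dg_const.
      by rewrite hm; exact: cy4.
    by case: r or {h hm en} => [|r].
Qed.

Local Close Scope ring_scope.

Theorem proposition4p5 :
  (forall n : nat, (1 <= n)%N ->
     has_form (ppow x0 n) 0 (11, 11, 11)%N (17, 17, 17)%N \/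
     has_form (ppow x0 n) 0 (11, 11, 11)%N (11, 11, 11)%N \/
     (exists r : nat, (1 <= r)%N /\ odd r /\
        has_form (ppow x0 n) (2 ^ r - 1)%N (26, 26, 26)%N (0, 0, 0)%N) \/
     (exists r : nat, (2 <= r)%N /\ ~~ odd r /\
        has_form (ppow x0 n) (2 ^ r - 1)%N (11, 11, 11)%N (0, 0, 0)%N)) /\
  (forall n : nat, (1 <= n)%N ->
     has_form (ppow y0 n) 0 (11, 11, 11)%N (44, 219, 177)%N \/
     has_form (ppow y0 n) 0 (11, 11, 11)%N (54, 193, 171)%N \/
     (exists r : nat, (1 <= r)%N /\ odd r /\
        has_form (ppow y0 n) (2 ^ r - 1)%N (26, 26, 26)%N (0, 157, 106)%N) \/
     (exists r : nat, (2 <= r)%N /\ ~~ odd r /\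
        has_form (ppow y0 n) (2 ^ r - 1)%N (11, 11, 11)%N (61, 202, 160)%N)).
Proof. split; [exact: part1 | exact: part2]. Qed.
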